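(* Assume (A1) and fix all parameters except $\omega$. (i) As a function of $\omega\in[0,1]$, $P^*(\omega)$ is either strictly increasing on $[0,1]$, or strictly decreasing on $[0,1]$, or there exists $\omega_{P^*}\in(0,1)$ such that $P^*$ is strictly decreasing on $[0,\omega_{P^*})$ and strictly increasing on $(\omega_{P^*},1]$. As a function of $\omega\in[0,1]$, $Y^*(\omega)$ is either strictly increasing on $[0,1]$, or there exists $\omega_{Y^*}\in(0,1)$ such that $Y^*$ is strictly increasing on $[0,\omega_{Y^*})$ and strictly decreasing on $(\omega_{Y^*},1]$. (ii) Assume moreover $1/\sqrt{2\beta}<b<\min\{dA/(1-c),F^*\}$ and $$P^L(\omega)\ne P^*(\omega)-\frac{1-c}{1-c-\omega^2dh}\sqrt{b^2-\frac{1}{2\beta}}\quad\text{for all }\omega\in(0,1).$$ Then for each $j\in\{L,H\}$: on $(0,1)$, $P^j$ is either strictly increasing, or strictly decreasing, or there exists $\omega_{P^j}\in(0,1)$ such that $P^j$ is strictly decreasing on $(0,\omega_{P^j})$ and strictly increasing on $(\omega_{P^j},1)$; and $Y^j$ is either strictly increasing on $(0,1)$, or there exists $\omega_{Y^j}\in(0,1)$ such that $Y^j$ is strictly increasing on $(0,\omega_{Y^j})$ and strictly decreasing on $(\omega_{Y^j},1)$.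
   Context: Let $g_I,g_P:\mathbb{R}\to\mathbb{R}$ be continuously differentiable functions, each satisfying: $g(0)=0$ and $g$ strictly increasing; $g$ convex on $(-\infty,0]$ and concave on $[0,+\infty)$, with maximal slope attained at $0$ and $g'(0)=1$; $g$ bounded above and below. Parameters: $A>0$, $c\in(0,1)$, $\gamma>0$, $\omega\in[0,1]$, $h>0$, $d>0$, $\sigma>0$, $\mu>0$, $F^*>0$, $b>0$, $\beta>0$. Let $G=(G_1,G_2,G_3):\mathbb{R}^3\to\mathbb{R}^3$ be defined by $G_1(Y,P,Z)=A+cY+\gamma g_I(Y-Z)+\omega hP$, $G_2(Y,P,Z)=P+\sigma g_P\big(\mu\big((1-\omega)F^*+\omega dY-P+b(2\alpha(Y,P)-1)\big)\big)$, $G_3(Y,P,Z)=Y$, where $\alpha(Y,P)=\dfrac{1}{1+e^{-4b\beta(P-(1-\omega)F^*-\omega dY)}}$. A steady state is a fixed point of $G$. Assumption (A1): $1-c-hd>0$. The steady state $S^*=(Y^*,P^*,Y^* )$ has $Y^*(\omega)=\frac{A+\omega(1-\omega)hF^*}{1-c-\omega^2dh}$, $P^*(\omega)=\frac{(1-\omega)(1-c)F^*+\omega dA}{1-c-\omega^2dh}$. When $b>1/\sqrt{2\beta}$, $G$ has exactly three steady states for each $\omega$, and $S^L(\omega)=(Y^L,P^L,Y^L)$, $S^H(\omega)=(Y^H,P^H,Y^H)$ denote the two with $P^L<P^*<P^H$. *)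

(* Defs.v *)
From Stdlib Require Import Reals Lra.
Open Scope R_scope.

Definition strict_incr_on (D : R -> Prop) (f : R -> R) : Prop :=
  forall x y, D x -> D y -> x < y -> f x < f y.
Definition strict_decr_on (D : R -> Prop) (f : R -> R) : Prop :=
  forall x y, D x -> D y -> x < y -> f y < f x.

Definition convex_on (D : R -> Prop) (g : R -> R) : Prop :=
  forall x y t, D x -> D y -> 0 <= t <= 1 ->
    g (t * x + (1 - t) * y) <= t * g x + (1 - t) * g y.
Definition concave_on (D : R -> Prop) (g : R -> R) : Prop :=
  forall x y t, D x -> D y -> 0 <= t <= 1 ->
    t * g x + (1 - t) * g y <= g (t * x + (1 - t) * y).

Definition admissible_g (g : R -> R) : Prop :=
  exists g' : R -> R,
    (forall x, derivable_pt_lim g x (g' x)) /\ continuity g' /\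
    g 0 = 0 /\
    strict_incr_on (fun _ => True) g /\
    convex_on (fun x => x <= 0) g /\
    concave_on (fun x => 0 <= x) g /\
    (forall x, g' x <= g' 0) /\ g' 0 = 1 /\
    (exists m M, forall x, m <= g x <= M).

Definition alpha (b beta omega d Fstar Y P : R) : R :=
  1 / (1 + exp (- (4 * b * beta * (P - (1 - omega) * Fstar - omega * d * Y)))).

Definition Gmap (gI gP : R -> R)
    (A c gamma omega h d sigma mu Fstar b beta : R) (X : R * R * R) : R * R * R :=
  let '(Y, P, Z) := X in
  (A + c * Y + gamma * gI (Y - Z) + omega * h * P,
   P + sigma * gP (mu * ((1 - omega) * Fstar + omega * d * Y - P
                         + b * (2 * alpha b beta omega d Fstar Y P - 1))),
   Y).

Definition steady_state (gI gP : R -> R)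
    (A c gamma omega h d sigma mu Fstar b beta : R) (X : R * R * R) : Prop :=
  Gmap gI gP A c gamma omega h d sigma mu Fstar b beta X = X.

Definition Ystar (A c h d Fstar omega : R) : R :=
  (A + omega * (1 - omega) * h * Fstar) / (1 - c - omega ^ 2 * d * h).
Definition Pstar (A c h d Fstar omega : R) : R :=
  ((1 - omega) * (1 - c) * Fstar + omega * d * A) / (1 - c - omega ^ 2 * d * h).

Definition closed01 (w : R) : Prop := 0 <= w <= 1.
Definition open01 (w : R) : Prop := 0 < w < 1.

Definition P_shape (D : R -> Prop) (f : R -> R) : Prop :=
  strict_incr_on D f \/ strict_decr_on D f \/
  exists w0, 0 < w0 < 1 /\
    strict_decr_on (fun w => D w /\ w < w0) f /\
    strict_incr_on (fun w => D w /\ w0 < w) f.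

Definition Y_shape (D : R -> Prop) (f : R -> R) : Prop :=
  strict_incr_on D f \/
  exists w0, 0 < w0 < 1 /\
    strict_incr_on (fun w => D w /\ w < w0) f /\
    strict_decr_on (fun w => D w /\ w0 < w) f.

(* Main.v *)
Require Import Defs.
From Stdlib Require Import Reals Lra Psatz.
From Coquelicot Require Import Coquelicot.
Open Scope R_scope.

Definition fP (A c h d F k w : R) := ((1-w)*(1-c)*F + w*d*A - (1-c)*k) / (1 - c - w^2*d*h).
Definition fY (A c h d F k w : R) := (A + h*(F-k)*w - h*F*w^2) / (1 - c - w^2*d*h).
Definition Kf (A c h d F k x y : R) := (1-c)*(F-k)*(d*h)*(x+y) + (d*A-(1-c)*F)*(1-c) + (d*A-(1-c)*F)*(d*h)*x*y.
Definition Mf (A c h d F k x y : R) := (d*A-(1-c)*F)*(x+y) + (F-k)*(1-c) + (F-k)*(d*h)*x*y.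

Lemma Dpos c h d w : 0<h -> 0<d -> 1-c-h*d>0 -> 0<=w<=1 -> 0 < 1-c-w^2*d*h.
Proof. intros. assert (w^2 <= 1) by nra. assert (0 < h*d) by nra. nra. Qed.

Lemma fP_diff A c h d F k x y : 0<h -> 0<d -> 1-c-h*d>0 -> 0<=x<=1 -> 0<=y<=1 ->
  fP A c h d F k y - fP A c h d F k x =
  (y-x)*Kf A c h d F k x y / ((1-c-x^2*d*h)*(1-c-y^2*d*h)).
Proof.
  intros. pose proof (Dpos c h d x) as Hx. pose proof (Dpos c h d y) as Hy.
  unfold fP, Kf. field. split; lra.
Qed.

Lemma fY_diff A c h d F k x y : 0<h -> 0<d -> 1-c-h*d>0 -> 0<=x<=1 -> 0<=y<=1 ->
  fY A c h d F k y - fY A c h d F k x =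
  (y-x)*h*Mf A c h d F k x y / ((1-c-x^2*d*h)*(1-c-y^2*d*h)).
Proof.
  intros. pose proof (Dpos c h d x) as Hx. pose proof (Dpos c h d y) as Hy.
  unfold fY, Mf. field. split; lra.
Qed.

Section S.
Variables (A c h d F k : R).
Hypotheses (hc : 0 < c < 1) (hh : 0 < h) (hd : 0 < d) (A1 : 1 - c - h*d > 0)
  (hkF : k < F) (hku : (1-c)*k < d*A).

Lemma amt t : 0<=t<=1 -> 0 < (1-c)*(F-k) + (d*A-(1-c)*F)*t.
Proof.
  intros Ht.
  assert (E : (1-c)*(F-k) + (d*A-(1-c)*F)*t = (1-t)*((1-c)*(F-k)) + t*(d*A - (1-c)*k)) by ring.
  rewrite E. assert (0 < (1-c)*(F-k)) by nra.
  destruct (Req_dec t 0). subst; lra. nra.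
Qed.

Lemma Kmono p q r s : 0<=r -> r<=p -> p<=1 -> 0<=s -> s<=q -> q<=1 -> (r<p \/ s<q) ->
  Kf A c h d F k r s < Kf A c h d F k p q.
Proof.
  intros.
  assert (E : Kf A c h d F k p q - Kf A c h d F k r s =
    (d*h)*((p-r)*((1-c)*(F-k) + (d*A-(1-c)*F)*q) + (q-s)*((1-c)*(F-k) + (d*A-(1-c)*F)*r)))
    by (unfold Kf; ring).
  pose proof (amt q ltac:(lra)). pose proof (amt r ltac:(lra)).
  assert (0 < d*h) by nra.
  assert (0 < (p-r)*((1-c)*(F-k) + (d*A-(1-c)*F)*q) + (q-s)*((1-c)*(F-k) + (d*A-(1-c)*F)*r)).
  { destruct H5; nra. }
  nra.
Qed.

Lemma fP_lt x y : 0<=x<=1 -> 0<=y<=1 -> x<y -> 0 < Kf A c h d F k x y ->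
  fP A c h d F k x < fP A c h d F k y.
Proof.
  intros. pose proof (fP_diff A c h d F k x y hh hd A1 H H0).
  pose proof (Dpos c h d x hh hd A1 H). pose proof (Dpos c h d y hh hd A1 H0).
  assert (0 < (y-x)*Kf A c h d F k x y / ((1-c-x^2*d*h)*(1-c-y^2*d*h))).
  { apply Rdiv_lt_0_compat; nra. }
  lra.
Qed.

Lemma fP_gt x y : 0<=x<=1 -> 0<=y<=1 -> x<y -> Kf A c h d F k x y < 0 ->
  fP A c h d F k y < fP A c h d F k x.
Proof.
  intros. pose proof (fP_diff A c h d F k x y hh hd A1 H H0).
  pose proof (Dpos c h d x hh hd A1 H). pose proof (Dpos c h d y hh hd A1 H0).
  assert (0 < (y-x)*(-Kf A c h d F k x y) / ((1-c-x^2*d*h)*(1-c-y^2*d*h))).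
  { apply Rdiv_lt_0_compat; nra. }
  assert ((y-x)*(-Kf A c h d F k x y) / ((1-c-x^2*d*h)*(1-c-y^2*d*h)) =
    - ((y-x)*Kf A c h d F k x y / ((1-c-x^2*d*h)*(1-c-y^2*d*h)))) by (field; lra).
  lra.
Qed.

Lemma fY_lt x y : 0<=x<=1 -> 0<=y<=1 -> x<y -> 0 < Mf A c h d F k x y ->
  fY A c h d F k x < fY A c h d F k y.
Proof.
  intros. pose proof (fY_diff A c h d F k x y hh hd A1 H H0).
  pose proof (Dpos c h d x hh hd A1 H). pose proof (Dpos c h d y hh hd A1 H0).
  assert (0 < (y-x)*h*Mf A c h d F k x y / ((1-c-x^2*d*h)*(1-c-y^2*d*h))).
  { apply Rdiv_lt_0_compat. apply Rmult_lt_0_compat; nra. nra. }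
  lra.
Qed.

Lemma fY_gt x y : 0<=x<=1 -> 0<=y<=1 -> x<y -> Mf A c h d F k x y < 0 ->
  fY A c h d F k y < fY A c h d F k x.
Proof.
  intros. pose proof (fY_diff A c h d F k x y hh hd A1 H H0).
  pose proof (Dpos c h d x hh hd A1 H). pose proof (Dpos c h d y hh hd A1 H0).
  assert (0 < (y-x)*h*(-Mf A c h d F k x y) / ((1-c-x^2*d*h)*(1-c-y^2*d*h))).
  { apply Rdiv_lt_0_compat. apply Rmult_lt_0_compat; nra. nra. }
  assert ((y-x)*h*(-Mf A c h d F k x y) / ((1-c-x^2*d*h)*(1-c-y^2*d*h)) =
    - ((y-x)*h*Mf A c h d F k x y / ((1-c-x^2*d*h)*(1-c-y^2*d*h)))) by (field; lra).
  lra.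
Qed.

Lemma P_gen (D : R -> Prop) : (forall w, D w -> 0 <= w <= 1) -> P_shape D (fP A c h d F k).
Proof.
  intros HD.
  destruct (Rle_lt_dec 0 (Kf A c h d F k 0 0)) as [H0|H0].
  { left. intros x y Hx Hy Hxy. apply HD in Hx. apply HD in Hy.
    apply fP_lt; auto. pose proof (Kmono x y 0 0 ltac:(lra) ltac:(lra) ltac:(lra) ltac:(lra) ltac:(lra) ltac:(lra) ltac:(lra)). lra. }
  destruct (Rle_lt_dec (Kf A c h d F k 1 1) 0) as [H1|H1].
  { right; left. intros x y Hx Hy Hxy. apply HD in Hx. apply HD in Hy.
    apply fP_gt; auto. pose proof (Kmono 1 1 x y ltac:(lra) ltac:(lra) ltac:(lra) ltac:(lra) ltac:(lra) ltac:(lra) ltac:(lra)). lra. }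
  destruct (IVT (fun w => Kf A c h d F k w w) 0 1) as [z [Hz Kz]].
  { unfold Kf. reg. } lra. lra. lra.
  cbv beta in Kz.
  assert (z <> 0) by (intro; subst; lra). assert (z <> 1) by (intro; subst; lra).
  right; right. exists z. split; [lra|split].
  - intros x y [Hx Hxz] [Hy Hyz] Hxy. apply HD in Hx. apply HD in Hy.
    apply fP_gt; auto. pose proof (Kmono z z x y ltac:(lra) ltac:(lra) ltac:(lra) ltac:(lra) ltac:(lra) ltac:(lra) ltac:(lra)). lra.
  - intros x y [Hx Hxz] [Hy Hyz] Hxy. apply HD in Hx. apply HD in Hy.
    apply fP_lt; auto. pose proof (Kmono x y z z ltac:(lra) ltac:(lra) ltac:(lra) ltac:(lra) ltac:(lra) ltac:(lra) ltac:(lra)). lra.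
Qed.

Lemma M_interp x y p : p <> 0 ->
  Mf A c h d F k x y = ((p-x)*(p-y)*Mf A c h d F k 0 0 + x*(p-y)*Mf A c h d F k p 0
     + (p-x)*y*Mf A c h d F k 0 p + x*y*Mf A c h d F k p p)/(p*p).
Proof. intros. unfold Mf. field. auto. Qed.

Lemma M_interp2 x y p : p <> 1 ->
  Mf A c h d F k x y = ((1-x)*(1-y)*Mf A c h d F k p p + (x-p)*(1-y)*Mf A c h d F k 1 p
     + (1-x)*(y-p)*Mf A c h d F k p 1 + (x-p)*(y-p)*Mf A c h d F k 1 1)/((1-p)*(1-p)).
Proof. intros. unfold Mf. field. lra. Qed.

Lemma Y_gen (D : R -> Prop) : (forall w, D w -> 0 <= w <= 1) -> Y_shape D (fY A c h d F k).
Proof.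
  intros HD.
  assert (M00 : 0 < Mf A c h d F k 0 0) by (unfold Mf; nra).
  assert (M01 : 0 < Mf A c h d F k 0 1) by (unfold Mf; nra).
  assert (M10 : Mf A c h d F k 1 0 = Mf A c h d F k 0 1) by (unfold Mf; ring).
  destruct (Rle_lt_dec 0 (Mf A c h d F k 1 1)) as [H1|H1].
  { left. intros x y Hx Hy Hxy. apply HD in Hx. apply HD in Hy.
    apply fY_lt; auto. rewrite (M_interp x y 1) by lra. rewrite M10.
    apply Rdiv_lt_0_compat; [|lra].
    assert (0 <= (1-x)*(1-y)*Mf A c h d F k 0 0) by (apply Rmult_le_pos; nra).
    assert (0 <= x*(1-y)*Mf A c h d F k 0 1) by (apply Rmult_le_pos; nra).
    assert (0 < (1-x)*y*Mf A c h d F k 0 1) by (apply Rmult_lt_0_compat; nra).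
    assert (0 <= x*y*Mf A c h d F k 1 1) by (apply Rmult_le_pos; nra).
    lra. }
  destruct (IVT (fun w => - Mf A c h d F k w w) 0 1) as [z [Hz Mz]].
  { unfold Mf. reg. } lra. lra. lra.
  cbv beta in Mz.
  assert (z <> 0) by (intro; subst; lra). assert (z <> 1) by (intro; subst; lra).
  assert (Mzz : Mf A c h d F k z z = 0) by lra.
  assert (Dz : 0 < (1-c) - d*h*z^2) by (pose proof (Dpos c h d z hh hd A1 Hz); nra).
  assert (Fk : 0 < F - k) by lra.
  assert (Mz0 : 2 * Mf A c h d F k z 0 = (F-k)*((1-c) - d*h*z^2)).
  { revert Mzz; unfold Mf; intros; nra. }
  assert (Mz0p : 0 < Mf A c h d F k z 0) by nra.
  assert (Mz1 : 2*z*(Mf A c h d F k z 1) = - (1-z)*(F-k)*((1-c) - d*h*z^2)).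
  { revert Mzz; unfold Mf; intros; nra. }
  assert (Mz1n : Mf A c h d F k z 1 < 0).
  { assert (0 < (1-z)*(F-k)*((1-c) - d*h*z^2)) by (apply Rmult_lt_0_compat; nra). nra. }
  assert (S0 : Mf A c h d F k 0 z = Mf A c h d F k z 0) by (unfold Mf; ring).
  assert (S1 : Mf A c h d F k 1 z = Mf A c h d F k z 1) by (unfold Mf; ring).
  right. exists z. split; [lra|split].
  - intros x y [Hx Hxz] [Hy Hyz] Hxy. apply HD in Hx. apply HD in Hy.
    apply fY_lt; auto. rewrite (M_interp x y z) by auto. rewrite S0, Mzz.
    apply Rdiv_lt_0_compat; [|nra].
    assert (0 < (z-x)*(z-y)*Mf A c h d F k 0 0) by (apply Rmult_lt_0_compat; nra).
    assert (0 <= x*(z-y)*Mf A c h d F k z 0) by (apply Rmult_le_pos; nra).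
    assert (0 <= (z-x)*y*Mf A c h d F k z 0) by (apply Rmult_le_pos; nra).
    lra.
  - intros x y [Hx Hxz] [Hy Hyz] Hxy. apply HD in Hx. apply HD in Hy.
    apply fY_gt; auto. rewrite (M_interp2 x y z) by auto. rewrite S1, Mzz.
    assert (0 < (1-z)*(1-z)) by nra.
    assert (E : forall u v, u < 0 -> u / v = - ((-u)/v)) by (intros; unfold Rdiv; ring).
    cut (0 < - ((1 - x) * (1 - y) * 0 + (x - z) * (1 - y) * Mf A c h d F k z 1 +
      (1 - x) * (y - z) * Mf A c h d F k z 1 + (x - z) * (y - z) * Mf A c h d F k 1 1) / ((1 - z) * (1 - z))).
    { intros Hc. unfold Rdiv in *. nra. }
    apply Rdiv_lt_0_compat; auto.
    assert (0 < (x-z)*(y-z)*(-Mf A c h d F k 1 1)) by (apply Rmult_lt_0_compat; nra).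
    assert (0 <= (x-z)*(1-y)*(-Mf A c h d F k z 1)) by (apply Rmult_le_pos; nra).
    assert (0 <= (1-x)*(y-z)*(-Mf A c h d F k z 1)) by (apply Rmult_le_pos; nra).
    lra.
Qed.
End S.

Definition Tf (b k x : R) := b*(2*(1/(1+exp(-(k*x)))) - 1).

Lemma T_odd b k x : Tf b k (-x) = - Tf b k x.
Proof.
  unfold Tf. replace (-(k*-x)) with (k*x) by ring.
  rewrite exp_Ropp. pose proof (exp_pos (k*x)). field. lra.
Qed.

Lemma T_bound b k x : 0 < b -> -b < Tf b k x < b.
Proof.
  intros. unfold Tf. pose proof (exp_pos (-(k*x))).
  assert (0 < 1/(1+exp(-(k*x))) < 1).
  { split. apply Rdiv_lt_0_compat; lra.
    apply (Rmult_lt_reg_r (1+exp(-(k*x)))); [lra|]. field_simplify; lra. }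
  nra.
Qed.

Lemma T_deriv b k x : derivable_pt_lim (fun x => Tf b k x - x) x
  (b*2*k*exp(-(k*x))/(1+exp(-(k*x)))^2 - 1).
Proof.
  apply is_derive_Reals. unfold Tf. pose proof (exp_pos (-(k*x))).
  auto_derive. lra. field. lra.
Qed.

Lemma T_uniq b k x1 x2 : 0 < b -> 0 < k -> 0 < x1 -> 0 < x2 ->
  Tf b k x1 = x1 -> Tf b k x2 = x2 -> x1 = x2.
Proof.
  intros hb hk.
  assert (main : forall x1 x2, 0 < x1 -> x1 < x2 -> Tf b k x1 = x1 -> Tf b k x2 = x2 -> False).
  { clear x1 x2. intros x1 x2 h1 h12 e1 e2.
    set (g' := fun x => b*2*k*exp(-(k*x))/(1+exp(-(k*x)))^2 - 1).
    destruct (MVT_cor2 (fun x => Tf b k x - x) g' 0 x1 h1) as [c1 [E1 C1]].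
    { intros; apply T_deriv. }
    destruct (MVT_cor2 (fun x => Tf b k x - x) g' x1 x2 h12) as [c2 [E2 C2]].
    { intros; apply T_deriv. }
    cbv beta in E1, E2. rewrite e1, e2 in *.
    assert (T0 : Tf b k 0 = 0).
    { unfold Tf. rewrite Rmult_0_r, Ropp_0, exp_0. field. }
    rewrite T0 in E1.
    assert (G1 : g' c1 = 0) by nra. assert (G2 : g' c2 = 0) by nra.
    unfold g' in G1, G2.
    set (z1 := exp (-(k*c1))) in *. set (z2 := exp (-(k*c2))) in *.
    assert (z2 < z1) by (apply exp_increasing; nra).
    assert (z1 < 1) by (rewrite <- exp_0; apply exp_increasing; nra).
    assert (0 < z2) by apply exp_pos.
    assert (Q1 : b*2*k*z1 = (1+z1)^2).
    { assert (W : b*2*k*z1/(1+z1)^2 = 1) by lra. unfold Rdiv in W.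
      assert (0 < (1+z1)^2) by nra.
      apply (Rmult_eq_reg_r (/ (1+z1)^2)); [|apply Rgt_not_eq, Rinv_0_lt_compat; auto].
      rewrite W. field. lra. }
    assert (Q2 : b*2*k*z2 = (1+z2)^2).
    { assert (W : b*2*k*z2/(1+z2)^2 = 1) by lra. unfold Rdiv in W.
      assert (0 < (1+z2)^2) by nra.
      apply (Rmult_eq_reg_r (/ (1+z2)^2)); [|apply Rgt_not_eq, Rinv_0_lt_compat; auto].
      rewrite W. field. lra. }
    assert (b*2*k = 2 + z1 + z2).
    { apply (Rmult_eq_reg_r (z1 - z2)); [|lra]. nra. }
    nra. }
  intros h1 h2 e1 e2.
  destruct (Rtotal_order x1 x2) as [H|[H|H]]; auto.
  - exfalso; exact (main x1 x2 h1 H e1 e2).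
  - exfalso; exact (main x2 x1 h2 H e2 e1).
Qed.

Lemma g_zero g x : admissible_g g -> g x = 0 -> x = 0.
Proof.
  intros [g' [_ [_ [g0 [ginc _]]]]] H.
  destruct (Rtotal_order x 0) as [Hx|[Hx|Hx]]; auto.
  - pose proof (ginc x 0 I I Hx). lra.
  - pose proof (ginc 0 x I I Hx). lra.
Qed.

Lemma ss_eq gI gP A c gamma w h d sigma mu F b beta Y P :
  admissible_g gI -> admissible_g gP -> 0 < sigma -> 0 < mu ->
  steady_state gI gP A c gamma w h d sigma mu F b beta (Y, P, Y) ->
  (1-c)*Y = A + w*h*P /\
  P - (1-w)*F - w*d*Y = Tf b (4*b*beta) (P - (1-w)*F - w*d*Y).
Proof.
  intros HI HP hs hm H. unfold steady_state, Gmap in H.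
  injection H as H1 H2.
  assert (gI0 : gI 0 = 0) by (destruct HI as [? [? [? [? _]]]]; auto).
  replace (Y - Y) with 0 in H1 by ring. rewrite gI0 in H1.
  split. lra.
  assert (E : sigma * gP (mu * ((1 - w) * F + w * d * Y - P + b * (2 * alpha b beta w d F Y P - 1))) = 0) by lra.
  apply Rmult_integral in E. destruct E as [E|E]; [lra|].
  apply g_zero in E; auto. apply Rmult_integral in E. destruct E as [E|E]; [lra|].
  unfold alpha in E. unfold Tf. lra.
Qed.

Lemma x_rel A c h d F w Y P : 0 < c < 1 -> 0 < 1-c-w^2*d*h ->
  (1-c)*Y = A + w*h*P ->
  (1-c)*(P - (1-w)*F - w*d*Y) = (1-c-w^2*d*h)*(P - Pstar A c h d F w).
Proof.
  intros hc hD H.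
  assert (E : (1-c)*(P - (1-w)*F - w*d*Y) = (1-c)*P - (1-c)*(1-w)*F - w*d*((1-c)*Y)) by ring.
  rewrite E, H. unfold Pstar. field. lra.
Qed.

Lemma P_from_x A c h d F w P k : 0 < 1-c-w^2*d*h ->
  (1-c)*(-k) = (1-c-w^2*d*h)*(P - Pstar A c h d F w) -> P = fP A c h d F k w.
Proof.
  intros hD H. unfold Pstar in H.
  assert (H' : (1-c-w^2*d*h)*P = (1-w)*(1-c)*F + w*d*A - (1-c)*k).
  { assert (E: (1-c-w^2*d*h)*(P - ((1 - w) * (1 - c) * F + w * d * A) / (1 - c - w ^ 2 * d * h))
       = (1-c-w^2*d*h)*P - ((1 - w) * (1 - c) * F + w * d * A)) by (field; lra).
    lra. }
  unfold fP. rewrite <- H'. field. lra.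
Qed.

Lemma Y_from_P A c h d F w Y k : 0 < c < 1 -> 0 < 1-c-w^2*d*h ->
  (1-c)*Y = A + w*h*fP A c h d F k w -> Y = fY A c h d F k w.
Proof.
  intros hc hD H. apply (Rmult_eq_reg_l (1-c)); [|lra]. rewrite H.
  unfold fP, fY. field. lra.
Qed.

Lemma P_ext D f g : (forall w, D w -> f w = g w) -> P_shape D f -> P_shape D g.
Proof.
  intros E [H|[H|[w0 [Hw [H1 H2]]]]].
  - left. intros x y Hx Hy Hxy. rewrite <- !E by auto. auto.
  - right; left. intros x y Hx Hy Hxy. rewrite <- !E by auto. auto.
  - right; right. exists w0. split; auto. split.
    + intros x y Hx Hy Hxy. rewrite <- !E by (destruct Hx; destruct Hy; auto). auto.
    + intros x y Hx Hy Hxy. rewrite <- !E by (destruct Hx; destruct Hy; auto). auto.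
Qed.

Lemma Y_ext D f g : (forall w, D w -> f w = g w) -> Y_shape D f -> Y_shape D g.
Proof.
  intros E [H|[w0 [Hw [H1 H2]]]].
  - left. intros x y Hx Hy Hxy. rewrite <- !E by auto. auto.
  - right. exists w0. split; auto. split.
    + intros x y Hx Hy Hxy. rewrite <- !E by (destruct Hx; destruct Hy; auto). auto.
    + intros x y Hx Hy Hxy. rewrite <- !E by (destruct Hx; destruct Hy; auto). auto.
Qed.

Lemma branch gI gP A c gamma h d sigma mu F b beta (Yf Pf : R -> R) (sgn : R) :
  0 < c < 1 -> 0 < h -> 0 < d -> 1 - c - h*d > 0 -> 0 < sigma -> 0 < mu -> 0 < b -> 0 < beta ->
  admissible_g gI -> admissible_g gP -> (sgn = 1 \/ sgn = -1) ->
  (forall w, open01 w ->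
      steady_state gI gP A c gamma w h d sigma mu F b beta (Yf w, Pf w, Yf w) /\
      0 < sgn * (Pf w - Pstar A c h d F w)) ->
  exists k, 0 < sgn * (-k) < b /\
    (forall w, open01 w -> Pf w = fP A c h d F k w /\ Yf w = fY A c h d F k w).
Proof.
  intros hc hh hd A1 hs hm hb hbeta HI HP Hsgn Hss.
  set (x := fun w => Pf w - (1-w)*F - w*d*Yf w).
  assert (Hx : forall w, open01 w -> (1-c)*Yf w = A + w*h*Pf w /\ x w = Tf b (4*b*beta) (x w)
             /\ (1-c)*(x w) = (1-c-w^2*d*h)*(Pf w - Pstar A c h d F w) /\ 0 < sgn * x w
             /\ 0 < 1-c-w^2*d*h).
  { intros w Hw. destruct (Hss w Hw) as [Hs Hlt].
    destruct (ss_eq _ _ _ _ _ _ _ _ _ _ _ _ _ _ _ HI HP hs hm Hs) as [E1 E2].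
    assert (hD : 0 < 1-c-w^2*d*h) by (apply Dpos; auto; destruct Hw; lra).
    pose proof (x_rel A c h d F w (Yf w) (Pf w) hc hD E1) as E3.
    repeat split; auto.
    assert (0 < sgn * ((1-c)*x w)).
    { unfold x. rewrite E3. destruct Hsgn; subst; nra. }
    destruct Hsgn; subst; nra. }
  assert (Hh : open01 (1/2)) by (unfold open01; lra).
  exists (- x (1/2)).
  split.
  { destruct (Hx _ Hh) as [_ [E2 [_ [Hp _]]]]. pose proof (T_bound b (4*b*beta) (x (1/2)) hb).
    destruct Hsgn; subst; split; nra. }
  intros w Hw.
  destruct (Hx _ Hw) as [E1 [E2 [E3 [Hp hD]]]].
  destruct (Hx _ Hh) as [_ [F2 [_ [Fp _]]]].
  assert (Xeq : x w = x (1/2)).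
  { assert (hk : 0 < 4*b*beta) by nra.
    destruct Hsgn; subst.
    - apply (T_uniq b (4*b*beta)); auto; lra.
    - assert (- x w = - x (1/2)); [|lra].
      apply (T_uniq b (4*b*beta)); try lra; rewrite T_odd; lra. }
  assert (HP' : Pf w = fP A c h d F (- x (1/2)) w).
  { apply P_from_x; auto. rewrite Ropp_involutive, <- Xeq. exact E3. }
  split; auto. apply Y_from_P; auto. rewrite <- HP'. auto.
Qed.

Theorem proposition3
  (A c gamma h d sigma mu Fstar b beta : R)
  (hA : 0 < A) (hc : 0 < c < 1) (hgamma : 0 < gamma) (hh : 0 < h) (hd : 0 < d)
  (hsigma : 0 < sigma) (hmu : 0 < mu) (hF : 0 < Fstar) (hb : 0 < b)
  (hbeta : 0 < beta)
  (A1 : 1 - c - h * d > 0) :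
  (* (i) *)
  (P_shape closed01 (Pstar A c h d Fstar) /\
   Y_shape closed01 (Ystar A c h d Fstar)) /\
  (* (ii) *)
  (forall (gI gP : R -> R), admissible_g gI -> admissible_g gP ->
   1 / sqrt (2 * beta) < b -> b < Rmin (d * A / (1 - c)) Fstar ->
   forall YL PL YH PH : R -> R,
   (forall w, open01 w ->
      steady_state gI gP A c gamma w h d sigma mu Fstar b beta (YL w, PL w, YL w) /\
      PL w < Pstar A c h d Fstar w) ->
   (forall w, open01 w ->
      steady_state gI gP A c gamma w h d sigma mu Fstar b beta (YH w, PH w, YH w) /\
      Pstar A c h d Fstar w < PH w) ->
   (forall w, open01 w ->
      PL w <> Pstar A c h d Fstar w
               - (1 - c) / (1 - c - w ^ 2 * d * h) * sqrt (b ^ 2 - 1 / (2 * beta))) ->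
   (P_shape open01 PL /\ Y_shape open01 YL) /\
   (P_shape open01 PH /\ Y_shape open01 YH)).
Proof.
  assert (HC : forall w, closed01 w -> 0 <= w <= 1) by (unfold closed01; auto).
  assert (HO : forall w, open01 w -> 0 <= w <= 1) by (unfold open01; intros; lra).
  split.
  { split.
    - apply (P_ext closed01 (fP A c h d Fstar 0)).
      { intros w Hw. unfold fP, Pstar. f_equal. ring. }
      apply P_gen; auto; nra.
    - apply (Y_ext closed01 (fY A c h d Fstar 0)).
      { intros w Hw. unfold fY, Ystar. f_equal. ring. }
      apply Y_gen; auto; nra. }
  intros gI gP HI HP _ Hbu YL PL YH PH HL HH _.
  assert (Hb1 : b < d*A/(1-c)) by (pose proof (Rmin_l (d*A/(1-c)) Fstar); lra).
  assert (Hb2 : b < Fstar) by (pose proof (Rmin_r (d*A/(1-c)) Fstar); lra).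
  assert (Hb3 : (1-c)*b < d*A).
  { apply (Rmult_lt_compat_l (1-c)) in Hb1; [|lra].
    replace ((1-c)*(d*A/(1-c))) with (d*A) in Hb1 by (field; lra). lra. }
  split.
  - destruct (branch gI gP A c gamma h d sigma mu Fstar b beta YL PL (-1)) as [k [Hk Hf]];
      auto; try lra.
    { intros w Hw. destruct (HL w Hw). split; auto. lra. }
    split.
    + apply (P_ext open01 (fP A c h d Fstar k)). { intros; symmetry; apply Hf; auto. }
      apply P_gen; auto; nra.
    + apply (Y_ext open01 (fY A c h d Fstar k)). { intros; symmetry; apply Hf; auto. }
      apply Y_gen; auto; nra.
  - destruct (branch gI gP A c gamma h d sigma mu Fstar b beta YH PH 1) as [k [Hk Hf]];
      auto; try lra.
    { intros w Hw. destruct (HH w Hw). split; auto. lra. }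
    split.
    + apply (P_ext open01 (fP A c h d Fstar k)). { intros; symmetry; apply Hf; auto. }
      apply P_gen; auto; nra.
    + apply (Y_ext open01 (fY A c h d Fstar k)). { intros; symmetry; apply Hf; auto. }
      apply Y_gen; auto; nra.
Qed.
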